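(* Let $n\ge 3$. For a generic framed $n$-gon $(B_1,\dots,B_n;u_1,\dots,u_n)$ and each $i$, let $C_i$ be the unique circle passing through $B_{i-1}$ and $B_i$ and tangent to $u_{i-1}$ at $B_{i-1}$ and to $u_i$ at $B_i$, and orient the chain $(C_1,\dots,C_n)$ by the rotation of the circles given by the framing vectors. This defines a map $\mathcal F_n^\circ\to\mathcal C_n^\circ$ from generic framed $n$-gons to generic oriented chains of $n$ circles, and this map is a bijection.
   Context: Indices are mod $n$. For nonzero plane vectors $u,v$, $\angle(u,v)\in\mathbb{R}/2\pi\mathbb{Z}$ is the counterclockwise angle from $u$ to $v$. A framed $n$-gon is a tuple $(B_1,\dots,B_n;u_1,\dots,u_n)$ of points with $B_i\neq B_{i+1}$ and unit vectors $u_i$ with $\angle(u_i,B_{i+1}-B_i)=\angle(B_{i+1}-B_i,u_{i+1})$ for all $i$; $(u_i)$ and $(-u_i)$ are identified. A framed polygon is non-generic if for some $i$ the vectors $u_{i-1},u_i,u_{i+1}$ are tangent to the circle through $B_{i-1},B_i,B_{i+1}$; otherwise generic; $\mathcal F_n^\circ$ is the set of generic framed $n$-gons. An oriented chain of $n$ circles is a collection of circles $C_1,\dots,C_n$ with $C_i$ tangent to $C_{i+1}$ and $C_i\ne C_{i+1}$, with signs assigned to the circles so that externally tangent consecutive circles have opposite signs and internally tangent ones have equal signs, up to simultaneous change of all signs (equivalently, the circles can be rotated consistently like linked gears, circles of the same sign rotating in the same sense). A chain is non-generic if for some $i$ the tangency point of $C_{i-1}$ with $C_i$ coincides with the tangency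 point of $C_i$ with $C_{i+1}$; otherwise generic; $\mathcal C_n^\circ$ is the set of generic oriented chains. *)

(* Defs.v *)
From Stdlib Require Import Reals.
From mathcomp Require Import all_boot.

Set Implicit Arguments.
Unset Strict Implicit.
Unset Printing Implicit Defensive.

Local Open Scope R_scope.

Definition pt := (R * R)%type.
Definition vadd (a b : pt) : pt := (fst a + fst b, snd a + snd b).
Definition vsub (a b : pt) : pt := (fst a - fst b, snd a - snd b).
Definition vscale (k : R) (a : pt) : pt := (k * fst a, k * snd a).
Definition vneg (a : pt) : pt := (- fst a, - snd a).
Definition dot (a b : pt) : R := fst a * fst b + snd a * snd b.
Definition cross (a b : pt) : R := fst a * snd b - snd a * fst b.
Definition vnorm (a : pt) : R := sqrt (dot a a).
Definition is_unit (a : pt) : Prop := dot a a = 1.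
Definition normalize (a : pt) : pt := vscale (/ vnorm a) a.
Definition rot (t : R) (a : pt) : pt :=
  (cos t * fst a - sin t * snd a, sin t * fst a + cos t * snd a).
Definition rot90 (a : pt) : pt := (- snd a, fst a).

(* [angle_eq u v w z] : for nonzero u v w z, the counterclockwise angle
   from u to v equals (in R/2piZ) the counterclockwise angle from w to z,
   i.e. one and the same rotation takes the direction of u to that of v and
   the direction of w to that of z. *)
Definition angle_eq (u v w z : pt) : Prop :=
  exists t : R, rot t (normalize u) = normalize v /\
                rot t (normalize w) = normalize z.

Definition framed_polygon (n : nat) (B u : 'I_n -> pt) : Prop :=
  (forall i, B i <> B (ordS i)) /\
  (forall i, is_unit (u i)) /\
  (forall i, angle_eq (u i) (vsub (B (ordS i)) (B i))
                      (vsub (B (ordS i)) (B i)) (u (ordS i))).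

(* Oriented circle: center c, radius r > 0, and a sense of rotation
   (true = counterclockwise).  Oriented line: the line {p | <nrm,p> = h}
   with unit normal nrm; its direction of motion is rot90 nrm.
   These data are canonical: distinct data = distinct oriented objects. *)
Inductive ocirc : Type :=
  | OCircle (c : pt) (r : R) (ccw : bool)
  | OLine (nrm : pt) (h : R).

Definition valid (C : ocirc) : Prop :=
  match C with
  | OCircle _ r _ => 0 < r
  | OLine nrm _ => is_unit nrm
  end.

Definition on (C : ocirc) (p : pt) : Prop :=
  match C with
  | OCircle c r _ => vnorm (vsub p c) = r
  | OLine nrm h => dot nrm p = h
  end.

Definition otan (C : ocirc) (p : pt) : pt :=
  match C with
  | OCircle c r b =>
      let v := rot90 (vscale (/ r) (vsub p c)) in if b then v else vneg v
  | OLine nrm _ => rot90 nrm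
  end.

Definition orev (C : ocirc) : ocirc :=
  match C with
  | OCircle c r b => OCircle c r (~~ b)
  | OLine nrm h => OLine (vneg nrm) (- h)
  end.

Definition same_circle (C D : ocirc) : Prop := forall p, on C p <-> on D p.

Definition tangent_at (C : ocirc) (p u : pt) : Prop :=
  on C p /\ cross (otan C p) u = 0.

(* C and D are tangent at p and rotate compatibly there like linked gears:
   they pass through p with the same oriented tangent.  (For two circles this
   is: externally tangent <-> opposite senses, internally tangent <-> same
   sense.) *)
Definition gear_tangent_at (C D : ocirc) (p : pt) : Prop :=
  on C p /\ on D p /\ otan C p = otan D p.

Definition oriented_chain (n : nat) (C : 'I_n -> ocirc) : Prop :=
  forall i, valid (C i) /\ ~ same_circle (C i) (C (ordS i)) /\
            exists p, gear_tangent_at (C i) (C (ordS i)) p.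

Definition generic_chain (n : nat) (C : 'I_n -> ocirc) : Prop :=
  oriented_chain C /\
  forall i p q, gear_tangent_at (C (ord_pred i)) (C i) p ->
                gear_tangent_at (C i) (C (ordS i)) q -> p <> q.

Definition chain_equiv (n : nat) (C D : 'I_n -> ocirc) : Prop :=
  (forall i, D i = C i) \/ (forall i, D i = orev (C i)).

Definition nongeneric_framed (n : nat) (B u : 'I_n -> pt) : Prop :=
  exists i, exists D, valid D /\
    tangent_at D (B (ord_pred i)) (u (ord_pred i)) /\
    tangent_at D (B i) (u i) /\
    tangent_at D (B (ordS i)) (u (ordS i)).

Definition generic_framed (n : nat) (B u : 'I_n -> pt) : Prop :=
  framed_polygon B u /\ ~ nongeneric_framed B u.

Definition frame_equiv (n : nat) (u v : 'I_n -> pt) : Prop :=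
  (forall i, v i = u i) \/ (forall i, v i = vneg (u i)).

Definition induced_chain (n : nat) (B u : 'I_n -> pt) (C : 'I_n -> ocirc) : Prop :=
  forall i, valid (C i) /\
    tangent_at (C i) (B (ord_pred i)) (u (ord_pred i)) /\
    tangent_at (C i) (B i) (u i) /\
    otan (C i) (B (ord_pred i)) = u (ord_pred i) /\
    otan (C i) (B i) = u i.

(* Main.v *)
Require Import Defs.
From Stdlib Require Import Reals.
From mathcomp Require Import all_boot.
From Stdlib Require Import Lra Psatz Classical ClassicalEpsilon.
Local Open Scope R_scope.


Lemma vnorm_eq a r : 0 <= r -> dot a a = r * r -> vnorm a = r.
Proof. intros Hr H. unfold vnorm. rewrite H. apply sqrt_square; auto. Qed.

Lemma dot_ge0 a : 0 <= dot a a.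
Proof. unfold dot. nra. Qed.

Lemma vnorm_sq a : vnorm a * vnorm a = dot a a.
Proof. unfold vnorm. apply sqrt_sqrt, dot_ge0. Qed.

Lemma on_circ c r b p : on (OCircle c r b) p <-> dot (vsub p c) (vsub p c) = r * r /\ 0 <= r.
Proof.
  simpl. split.
  - intros <-. split. symmetry; apply vnorm_sq. unfold vnorm; apply sqrt_pos.
  - intros [H1 H2]. apply vnorm_eq; auto.
Qed.

Lemma on_orev C p : on (orev C) p <-> on C p.
Proof. destruct C; simpl; [tauto|]. unfold dot; simpl. split; intros; lra. Qed.

Lemma otan_orev C p : otan (orev C) p = vneg (otan C p).
Proof. destruct C as [c r b|nr h]; simpl.
  - destruct b; simpl; unfold vneg, rot90; simpl; rewrite ?Ropp_involutive; reflexivity.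
  - unfold rot90, vneg; simpl; reflexivity.
Qed.

Lemma valid_orev C : valid C -> valid (orev C).
Proof. destruct C; simpl; auto. unfold is_unit, dot; simpl. intros; lra. Qed.

Lemma otan_unit C p : valid C -> on C p -> is_unit (otan C p).
Proof.
  destruct C as [[c1 c2] r b|[n1 n2] h]; simpl.
  - intros Hr Hon. assert (H := proj1 (proj1 (on_circ _ _ b _) Hon)).
    unfold is_unit, dot, vsub in *; destruct p as [p1 p2]; simpl in *.
    destruct b; simpl;
    (transitivity (((p1-c1)*(p1-c1)+(p2-c2)*(p2-c2)) / (r*r)); [field; lra | rewrite H; field; lra]).
  - unfold is_unit, dot; simpl. intros; lra.
Qed.

Lemma cross_self a : cross a a = 0.
Proof. unfold cross; ring. Qed.

Lemma unit_nonzero a : is_unit a -> a <> (0,0).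
Proof. unfold is_unit, dot. intros H E; subst; simpl in H; lra. Qed.

Lemma lagrange w a e :
  dot w a * dot e e = dot w e * dot a e + cross w e * cross a e.
Proof. unfold dot, cross; ring. Qed.
Lemma sq_sum0 x y : x*x+y*y=0 -> x = 0 /\ y = 0.
Proof. intros H. assert (Hx : x*x = 0) by (apply Rle_antisym; nra).
  assert (Hy : y*y = 0) by (apply Rle_antisym; nra).
  apply Rmult_integral in Hx, Hy. split; destruct Hx, Hy; auto. Qed.
Lemma sq_eq_pos x y : 0 < x -> 0 < y -> x * x = y * y -> x = y.
Proof. intros. destruct (Rtotal_order x y) as [H2|[H2|H2]]; auto; nra. Qed.


Lemma same_sym C D : same_circle C D -> same_circle D C.
Proof. unfold same_circle. intros H p. rewrite H. tauto. Qed.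

Lemma on_circ_pt c1 c2 r b x y : 0 <= r -> x * x + y * y = r * r ->
  on (OCircle (c1, c2) r b) (c1 + x, c2 + y).
Proof. intros Hr H. apply on_circ. split; auto. unfold dot, vsub; simpl.
  rewrite <- H. ring. Qed.

Lemma on_circ_pts c1 c2 r b : 0 <= r ->
  on (OCircle (c1, c2) r b) (c1 + r, c2 + 0) /\ on (OCircle (c1, c2) r b) (c1 + - r, c2 + 0) /\
  on (OCircle (c1, c2) r b) (c1 + 0, c2 + r) /\ on (OCircle (c1, c2) r b) (c1 + 0, c2 + - r).
Proof. intros Hr. repeat split; apply on_circ_pt; auto; ring. Qed.

Lemma no_circ_line c r b nr h : 0 < r -> is_unit nr ->
  same_circle (OCircle c r b) (OLine nr h) -> False.
Proof.
  intros Hr Hn S. destruct c as [c1 c2]. destruct nr as [n1 n2].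
  destruct (on_circ_pts c1 c2 r b (Rlt_le _ _ Hr)) as (A1 & A2 & A3 & A4).
  apply S in A1. apply S in A2. apply S in A3. apply S in A4.
  unfold is_unit, on, dot in *; simpl in *.
  assert (n1 * r = 0) by lra. assert (n2 * r = 0) by lra.
  assert (n1 = 0) by (apply Rmult_integral in H; lra).
  assert (n2 = 0) by (apply Rmult_integral in H0; lra). subst. lra.
Qed.

Lemma struct C D : valid C -> valid D -> same_circle C D -> D = C \/ D = orev C.
Proof.
  destruct C as [[c1 c2] r b|[n1 n2] h]; destruct D as [[d1 d2] r' b'|[m1 m2] k]; simpl.
  - intros Hr Hr' S.
    destruct (on_circ_pts c1 c2 r b (Rlt_le _ _ Hr)) as (A1 & A2 & A3 & A4).
    apply S, on_circ in A1. apply S, on_circ in A2. apply S, on_circ in A3. apply S, on_circ in A4.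
    unfold dot, vsub in *; simpl in *.
    destruct A1 as [A1 _], A2 as [A2 _], A3 as [A3 _], A4 as [A4 _].
    assert (E1: r * (c1 - d1) = 0) by nra. assert (E2: r * (c2 - d2) = 0) by nra.
    apply Rmult_integral in E1. apply Rmult_integral in E2.
    assert (c1 = d1) by lra. assert (c2 = d2) by lra. subst.
    assert (r = r') by nra. subst.
    destruct b, b'; simpl; auto.
  - intros Hr Hn S. exfalso. exact (no_circ_line _ _ _ _ _ Hr Hn S).
  - intros Hn Hr S. exfalso. exact (no_circ_line _ _ _ _ _ Hr Hn (same_sym _ _ S)).
  - intros Hn Hm S. unfold is_unit, dot in *; simpl in *.
    assert (P1: on (OLine (n1, n2) h) (h * n1, h * n2)).
    { simpl; unfold dot; simpl. transitivity (h * (n1*n1+n2*n2)); [ring|rewrite Hn; ring]. }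
    assert (P2: on (OLine (n1, n2) h) (h * n1 - n2, h * n2 + n1)).
    { simpl; unfold dot; simpl. transitivity (h * (n1*n1+n2*n2)); [ring|rewrite Hn; ring]. }
    apply S in P1. apply S in P2. simpl in P1, P2; unfold dot in P1, P2; simpl in P1, P2.
    assert (Cr: m2 * n1 - m1 * n2 = 0) by lra.
    set (l := m1 * n1 + m2 * n2).
    assert (M1: m1 = l * n1).
    { transitivity (m1 * (n1*n1+n2*n2)); [rewrite Hn; ring|].
      transitivity (l * n1 - n2 * (m2 * n1 - m1 * n2)); [unfold l; ring| rewrite Cr; ring]. }
    assert (M2: m2 = l * n2).
    { transitivity (m2 * (n1*n1+n2*n2)); [rewrite Hn; ring|].
      transitivity (l * n2 + n1 * (m2 * n1 - m1 * n2)); [unfold l; ring| rewrite Cr; ring]. }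
    assert (L2: l * l = 1).
    { rewrite M1 M2 in Hm. transitivity (l*l*(n1*n1+n2*n2)); [rewrite Hn; ring|]. rewrite <- Hm. ring. }
    assert (K: k = l * h).
    { rewrite <- P1. rewrite M1 M2. transitivity (l*h*(n1*n1+n2*n2)); [ring| rewrite Hn; ring]. }
    clearbody l. rewrite M1 M2 K.
    assert (l = 1 \/ l = -1) by nra. destruct H as [-> | ->].
    + left. f_equal; [f_equal|]; ring.
    + right. unfold vneg; simpl. f_equal; [f_equal|]; ring.
Qed.

Lemma otan_determines C D p : valid C -> valid D -> same_circle C D -> on C p ->
  otan C p = otan D p -> forall q, otan C q = otan D q.
Proof.
  intros HC HD S Hp E q. destruct (struct C D HC HD S) as [-> | ->]; auto.
  exfalso. rewrite otan_orev in E. assert (U := otan_unit C p HC Hp).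
  destruct (otan C p) as [x y]. unfold vneg in E; simpl in E. injection E; intros.
  unfold is_unit, dot in U; simpl in U. nra.
Qed.

Lemma same_cross C D p : valid C -> valid D -> same_circle C D ->
  cross (otan C p) (otan D p) = 0.
Proof.
  intros HC HD S. destruct (struct C D HC HD S) as [-> | ->]. apply cross_self.
  rewrite otan_orev. destruct (otan C p) as [x y]. unfold cross, vneg; simpl; ring.
Qed.


Lemma pt_neq (p q : pt) : p <> q -> 0 < (fst q - fst p) * (fst q - fst p) + (snd q - snd p) * (snd q - snd p).
Proof.
  destruct p as [p1 p2], q as [q1 q2]; simpl. intros H.
  destruct (Req_dec q1 p1); destruct (Req_dec q2 p2); try nra. subst. contradiction.
Qed.

Lemma key_alg w1 w2 a1 a2 e1 e2 :
  0 < w1*w1 + w2*w2 -> w1*w1+w2*w2 + 2*(w1*a1+w2*a2) = 0 ->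
  w1*e1 + w2*e2 = 0 -> a1*e2 - a2*e1 = 0 -> e1*e1+e2*e2 = 0.
Proof.
  intros Hw H1 H2 H3.
  assert (L := lagrange (w1,w2) (a1,a2) (e1,e2)). unfold dot, cross in L; simpl in L.
  rewrite H2 H3 in L.
  destruct (Req_dec (e1*e1+e2*e2) 0) as [|Hne]; auto.
  assert (w1*a1+w2*a2 = 0).
  { assert (He : 0 < e1*e1+e2*e2) by nra.
    apply (Rmult_eq_reg_r (e1*e1+e2*e2)); lra. }
  lra.
Qed.

Lemma uniq2 C D p q : valid C -> valid D -> on C p -> on D p ->
  cross (otan C p) (otan D p) = 0 -> on C q -> on D q -> p <> q -> same_circle C D.
Proof.
  intros HC HD HCp HDp Hx HCq HDq Hpq. assert (Hw := pt_neq _ _ Hpq).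
  destruct p as [p1 p2], q as [q1 q2]; simpl in Hw.
  destruct C as [[c1 c2] r b|[n1 n2] h]; destruct D as [[d1 d2] r' b'|[m1 m2] k]; simpl in HC, HD.
  - apply on_circ in HCp, HDp, HCq, HDq.
    destruct HCp as [HCp _], HDp as [HDp _], HCq as [HCq _], HDq as [HDq _].
    unfold dot, vsub in *; simpl in *.
    assert (Hc: (p1-c1)*(p2-d2) - (p2-c2)*(p1-d1) = 0).
    { destruct b, b'; unfold cross, rot90, vneg in Hx; simpl in Hx;
      first [ transitivity ((r*r') * 0); [rewrite <- Hx; field; repeat split; lra | ring]
            | transitivity (-(r*r') * 0); [rewrite <- Hx; field; repeat split; lra | ring]]. }
    assert (E: (d1 - c1)*(d1-c1) + (d2-c2)*(d2-c2) = 0).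
    { apply (key_alg (q1-p1) (q2-p2) (p1-c1) (p2-c2)); try lra; try nra. }
    destruct (sq_sum0 _ _ E) as [E1 E2]. assert (d1 = c1) by lra. assert (d2 = c2) by lra. subst.
    assert (r = r') by (apply sq_eq_pos; lra). subst.
    intros x. simpl. tauto.
  - exfalso. apply on_circ in HCp, HCq. destruct HCp as [HCp _], HCq as [HCq _].
    unfold is_unit, on, dot, vsub in *; simpl in *.
    assert (Hc: (p1-c1)*m2 - (p2-c2)*m1 = 0).
    { destruct b; unfold cross, rot90, vneg in Hx; simpl in Hx;
      first [ transitivity (r * 0); [rewrite <- Hx; field; repeat split; lra | ring]
            | transitivity (-r * 0); [rewrite <- Hx; field; repeat split; lra | ring]]. }
    assert (E := key_alg (q1-p1) (q2-p2) (p1-c1) (p2-c2) m1 m2 Hw ltac:(nra) ltac:(nra) Hc). lra.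
  - exfalso. apply on_circ in HDp, HDq. destruct HDp as [HDp _], HDq as [HDq _].
    unfold is_unit, on, dot, vsub in *; simpl in *.
    assert (Hc: (p1-d1)*n2 - (p2-d2)*n1 = 0).
    { destruct b'; unfold cross, rot90, vneg in Hx; simpl in Hx;
      first [ transitivity (r' * 0); [rewrite <- Hx; field; repeat split; lra | ring]
            | transitivity (-r' * 0); [rewrite <- Hx; field; repeat split; lra | ring]]. }
    assert (E := key_alg (q1-p1) (q2-p2) (p1-d1) (p2-d2) n1 n2 Hw ltac:(nra) ltac:(nra) Hc). lra.
  - unfold is_unit, on, dot, cross, rot90 in *; simpl in *.
    intros [x1 x2]. simpl.
    assert (L1 := lagrange (x1-p1,x2-p2) (m1,m2) (n1,n2)).
    assert (L2 := lagrange (x1-p1,x2-p2) (n1,n2) (m1,m2)).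
    unfold dot, cross in L1, L2; simpl in L1, L2.
    rewrite HC in L1. rewrite HD in L2.
    assert (X1 : m1 * n2 - m2 * n1 = 0) by lra.
    assert (X2 : n1 * m2 - n2 * m1 = 0) by lra.
    rewrite X1 in L1. rewrite X2 in L2.
    unfold dot; simpl. split; intros.
    + assert (Y : (x1 - p1) * n1 + (x2 - p2) * n2 = 0) by lra.
      rewrite Y in L1. lra.
    + assert (Y : (x1 - p1) * m1 + (x2 - p2) * m2 = 0) by lra.
      rewrite Y in L2. lra.
Qed.


Lemma normalize_unit u : is_unit u -> normalize u = u.
Proof. intros H. unfold normalize, vnorm. rewrite H sqrt_1. destruct u; unfold vscale; simpl.
  f_equal; field. Qed.

Lemma trig_exists c s : c * c + s * s = 1 -> exists t, cos t = c /\ sin t = s.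
Proof.
  intros H. assert (Hc : -1 <= c <= 1) by (split; nra).
  assert (Hs : sqrt (1 - c²) = Rabs s).
  { rewrite <- sqrt_Rsqr_abs. f_equal. unfold Rsqr. lra. }
  destruct (Rle_or_lt 0 s) as [Hs0|Hs0].
  - exists (acos c). rewrite cos_acos; auto. rewrite sin_acos; auto. rewrite Hs Rabs_right; lra.
  - exists (- acos c). rewrite cos_neg sin_neg cos_acos; auto. rewrite sin_acos; auto.
    rewrite Hs Rabs_left; lra.
Qed.

Lemma rot_exists x y : is_unit x -> is_unit y -> exists t, Defs.rot t x = y.
Proof.
  destruct x as [x1 x2], y as [y1 y2]. unfold is_unit, dot; simpl. intros Hx Hy.
  set (c := x1*y1 + x2*y2). set (s := x1*y2 - x2*y1).
  assert (H : c * c + s * s = 1).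
  { transitivity ((x1*x1+x2*x2)*(y1*y1+y2*y2)); [unfold c, s; ring| rewrite Hx Hy; ring]. }
  destruct (trig_exists c s H) as [t [Ht1 Ht2]]. exists t. unfold Defs.rot; simpl.
  rewrite Ht1 Ht2. unfold c, s. f_equal.
  - transitivity (y1 * (x1*x1+x2*x2)); [ring| rewrite Hx; ring].
  - transitivity (y2 * (x1*x1+x2*x2)); [ring| rewrite Hx; ring].
Qed.

Definition mk (P u Q : pt) : ocirc :=
  let d := vsub Q P in let m := rot90 u in let k := dot d m in
  match Req_EM_T k 0 with
  | left _ => OLine (vneg m) (dot (vneg m) P)
  | right _ => let s := dot d d / (2 * k) in
      match Rlt_dec 0 s with
      | left _ => OCircle (vadd P (vscale s m)) s true
      | right _ => OCircle (vadd P (vscale s m)) (- s) false end end.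

Lemma mk_spec P u Q t : is_unit u -> P <> Q -> Defs.rot t u = normalize (vsub Q P) ->
  valid (mk P u Q) /\ on (mk P u Q) P /\ on (mk P u Q) Q /\
  otan (mk P u Q) P = u /\ otan (mk P u Q) Q = Defs.rot t (normalize (vsub Q P)).
Proof.
  intros Hu HPQ Hrot.
  assert (Hw := pt_neq _ _ HPQ).
  assert (LL := vnorm_sq (vsub Q P)).
  assert (Lpos : 0 < vnorm (vsub Q P)).
  { unfold vnorm. apply sqrt_lt_R0. destruct P, Q; unfold dot, vsub in *; simpl in *; lra. }
  unfold normalize in *. revert LL Lpos Hrot.
  set (L := vnorm (vsub Q P)). clearbody L. intros LL Lpos Hrot.
  assert (Hcs := sin2_cos2 t). unfold Rsqr in Hcs.
  unfold Defs.rot in *. set (c := cos t) in *. set (s := sin t) in *. clearbody c s.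
  destruct P as [P1 P2], Q as [Q1 Q2], u as [u1 u2].
  unfold vscale, vsub, dot, is_unit in *; simpl in *.
  injection Hrot as R1 R2.
  assert (Hu1 : u1 = c * (/ L * (Q1 - P1)) + s * (/ L * (Q2 - P2))).
  { rewrite <- R1, <- R2. transitivity (u1 * (s*s+c*c)); [rewrite Hcs; ring | ring]. }
  assert (Hu2 : u2 = - s * (/ L * (Q1 - P1)) + c * (/ L * (Q2 - P2))).
  { rewrite <- R1, <- R2. transitivity (u2 * (s*s+c*c)); [rewrite Hcs; ring | ring]. }
  assert (Hk : (Q1 - P1) * (- u2) + (Q2 - P2) * u1 = s * L).
  { rewrite Hu1 Hu2. transitivity (s * ((Q1-P1)*(Q1-P1) + (Q2-P2)*(Q2-P2)) / L); [field; lra|].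
    rewrite <- LL. field. lra. }
  unfold mk, vsub, dot, rot90; simpl.
  destruct (Req_EM_T _ 0) as [Hk0|Hk0].
  - rewrite Hk0 in Hk. symmetry in Hk. assert (Hs : s = 0) by (apply Rmult_integral in Hk; lra).
    subst s. assert (Hc : c * c = 1) by lra.
    simpl. unfold dot, vneg, rot90, is_unit in *; simpl in *. rewrite !Ropp_involutive.
    unfold dot; simpl. split; [lra|]. split; [reflexivity|]. split; [lra|].
    split; [reflexivity|].
    rewrite Hu1 Hu2. f_equal; ring.
  - set (sg := ((Q1-P1)*(Q1-P1)+(Q2-P2)*(Q2-P2)) / (2 * ((Q1-P1)* - u2+(Q2-P2)*u1))).
    assert (Hs : s <> 0). { intro E. rewrite E in Hk. lra. }
    assert (Hsg : sg = L / (2 * s)).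
    { unfold sg. rewrite Hk -LL. field. split; lra. }
    clearbody sg. subst sg.
    assert (Hsg0 : L / (2 * s) <> 0).
    { unfold Rdiv. apply Rmult_integral_contrapositive; split; [lra|]. apply Rinv_neq_0_compat; lra. }
    unfold dot, is_unit in Hu; simpl in Hu.
    destruct (Rlt_dec 0 (L / (2 * s))) as [Hp|Hn]; simpl.
    + split; [lra|]. split; [apply vnorm_eq; [lra|]|]. 
      { unfold vsub, vadd, vscale, dot; simpl.
        transitivity (L / (2 * s) * (L / (2 * s)) * (u1*u1+u2*u2)); [ring | rewrite Hu; ring]. }
      split; [apply vnorm_eq; [lra|]|].
      { unfold vsub, vadd, vscale, dot; simpl.
        transitivity ((Q1-P1)*(Q1-P1)+(Q2-P2)*(Q2-P2) - 2 * (L / (2 * s)) * ((Q1 - P1) * - u2 + (Q2 - P2) * u1)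
           + L / (2 * s) * (L / (2 * s)) * (u1*u1+u2*u2)); [ring|].
        rewrite Hu Hk -LL. field. auto. }
      unfold vsub, vadd, vscale, rot90; simpl.
      split; (rewrite ?Hu1 ?Hu2; f_equal; field; repeat split; auto; lra).
    + assert (Hn' : L / (2 * s) < 0) by lra.
      split; [lra|]. split; [apply vnorm_eq; [lra|]|]. 
      { unfold vsub, vadd, vscale, dot; simpl.
        transitivity (L / (2 * s) * (L / (2 * s)) * (u1*u1+u2*u2)); [ring | rewrite Hu; ring]. }
      split; [apply vnorm_eq; [lra|]|].
      { unfold vsub, vadd, vscale, dot; simpl.
        transitivity ((Q1-P1)*(Q1-P1)+(Q2-P2)*(Q2-P2) - 2 * (L / (2 * s)) * ((Q1 - P1) * - u2 + (Q2 - P2) * u1)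
           + L / (2 * s) * (L / (2 * s)) * (u1*u1+u2*u2)); [ring|].
        rewrite Hu Hk -LL. field. auto. }
      unfold vsub, vadd, vscale, rot90, vneg; simpl.
      split; (rewrite ?Hu1 ?Hu2; f_equal; field; repeat split; auto; lra).
Qed.


Lemma normalize_is_unit a : a <> (0, 0) -> is_unit (normalize a).
Proof.
  intros H. assert (Hw := pt_neq _ _ (not_eq_sym H)). destruct a as [a1 a2]; simpl in Hw.
  assert (LL := vnorm_sq (a1, a2)).
  assert (Lpos : 0 < vnorm (a1, a2)). { unfold vnorm. apply sqrt_lt_R0. unfold dot; simpl; lra. }
  unfold normalize. revert LL Lpos. set (L := vnorm (a1, a2)). clearbody L. intros LL Lpos.
  unfold is_unit, dot, vscale in *; simpl in *.
  transitivity ((a1*a1+a2*a2)/(L*L)); [field; lra|]. rewrite LL. field. lra.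
Qed.

Lemma vsub_neq (p q : pt) : p <> q -> vsub q p <> (0, 0).
Proof. intros H E. apply H. destruct p, q; unfold vsub in E; simpl in E. injection E; intros.
  f_equal; lra. Qed.

Lemma ang C p q : valid C -> on C p -> on C q -> p <> q ->
  angle_eq (otan C p) (vsub q p) (vsub q p) (otan C q).
Proof.
  intros HC Hp Hq Hpq.
  assert (Ux := otan_unit C p HC Hp). assert (Uq := otan_unit C q HC Hq).
  assert (Ue := normalize_is_unit _ (vsub_neq _ _ Hpq)).
  destruct (rot_exists _ _ Ux Ue) as [t Ht].
  destruct (mk_spec p (otan C p) q t Ux Hpq Ht) as (V & Op & Oq & Tp & Tq).
  assert (S : same_circle C (mk p (otan C p) q)).
  { apply (uniq2 _ _ p q); auto. rewrite Tp. apply cross_self. }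
  assert (E := otan_determines _ _ p HC V S Hp (esym Tp) q).
  exists t. rewrite (normalize_unit _ Ux) (normalize_unit _ Uq). split; auto. rewrite E; auto.
Qed.

Lemma cross_vneg a b : cross (vneg a) (vneg b) = cross a b.
Proof. unfold cross, vneg; simpl; ring. Qed.

Lemma vneg_inj a b : vneg a = vneg b -> a = b.
Proof. destruct a, b; unfold vneg; simpl; intros E; injection E; intros; f_equal; lra. Qed.

Lemma cross_sym0 a b : cross a b = 0 -> cross b a = 0.
Proof. unfold cross; intros; lra. Qed.


Lemma mk_induced (n : nat) (B u : 'I_n -> pt) : framed_polygon B u ->
  induced_chain B u (fun i => mk (B (ord_pred i)) (u (ord_pred i)) (B i)).
Proof.
  intros [HB [Hu Ha]] i.
  destruct (Ha (ord_pred i)) as [t [T1 T2]]. rewrite ord_predK in T1 T2.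
  assert (Hne : B (ord_pred i) <> B i) by (have := HB (ord_pred i); rewrite ord_predK; auto).
  rewrite (normalize_unit _ (Hu _)) in T1. rewrite (normalize_unit _ (Hu _)) in T2.
  destruct (mk_spec _ _ _ t (Hu _) Hne T1) as (V & Op & Oq & Tp & Tq).
  rewrite T2 in Tq.
  split; auto. split; [split; auto; rewrite Tp; apply cross_self|].
  split; [split; auto; rewrite Tq; apply cross_self|]. auto.
Qed.

Lemma induced_gear (n : nat) (B u : 'I_n -> pt) C : induced_chain B u C ->
  forall i, gear_tangent_at (C i) (C (ordS i)) (B i).
Proof.
  intros H i. destruct (H i) as (V & _ & [Oi _] & _ & Ti).
  destruct (H (ordS i)) as (V' & [Oi' _] & _ & Ti' & _). rewrite ordSK in Oi' Ti'.
  split; auto. split; auto. congruence.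
Qed.

Lemma not_nongeneric (n : nat) (B u : 'I_n -> pt) C : framed_polygon B u -> induced_chain B u C ->
  (forall i, ~ same_circle (C i) (C (ordS i))) -> ~ nongeneric_framed B u.
Proof.
  intros [HB [Hu Ha]] HI HS [i [D (VD & T1 & T2 & T3)]].
  assert (Hne1 : B (ord_pred i) <> B i) by (have := HB (ord_pred i); rewrite ord_predK; auto).
  destruct (HI i) as (Vi & [O1 _] & [O2 _] & E1 & E2).
  destruct (HI (ordS i)) as (Vi' & [O1' _] & [O2' _] & E1' & E2'). rewrite ordSK in O1' E1'.
  assert (S1 : same_circle D (C i)).
  { apply (uniq2 _ _ (B (ord_pred i)) (B i)); auto; try apply T1; try apply T2.
    rewrite E1. apply T1. }
  assert (S2 : same_circle D (C (ordS i))).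
  { apply (uniq2 _ _ (B i) (B (ordS i))); auto; try apply T2; try apply T3.
    rewrite E1'. apply T2. }
  apply (HS i). intros x. rewrite <- (S1 x). apply S2.
Qed.

Lemma induced_not_same (n : nat) (B u : 'I_n -> pt) C : generic_framed B u -> induced_chain B u C ->
  forall i, ~ same_circle (C i) (C (ordS i)).
Proof.
  intros [HF HG] HI i S. apply HG. exists i, (C i).
  destruct (HI i) as (Vi & T1 & T2 & E1 & E2).
  destruct (HI (ordS i)) as (Vi' & T1' & [O2' _] & E1' & E2').
  split; auto. split; auto. split; auto. split. apply S; auto.
  rewrite <- E2'. apply same_cross; auto.
Qed.

Lemma gear_unique (n : nat) (B u : 'I_n -> pt) C : generic_framed B u -> induced_chain B u C ->
  forall i p, gear_tangent_at (C i) (C (ordS i)) p -> p = B i.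
Proof.
  intros HG HI i p [Op [Op' Ep]]. destruct (classic (p = B i)) as [|Hne]; auto. exfalso.
  destruct (induced_gear _ _ _ _ HI i) as [Ob [Ob' _]].
  destruct (HI i) as (Vi & _). destruct (HI (ordS i)) as (Vi' & _).
  apply (induced_not_same _ _ _ _ HG HI i).
  apply (uniq2 _ _ p (B i)); auto. rewrite Ep. apply cross_self.
Qed.



Theorem proposition2p9 (n : nat) (Hn : (3 <= n)%N) :
  (forall B u : 'I_n -> pt, generic_framed B u ->
     exists C, induced_chain B u C /\ generic_chain C /\
       (forall i D, valid D ->
          tangent_at D (B (ord_pred i)) (u (ord_pred i)) ->
          tangent_at D (B i) (u i) -> same_circle D (C i))) /\
  (forall (B u : 'I_n -> pt) (C : 'I_n -> ocirc), generic_framed B u ->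
     induced_chain B u C ->
     induced_chain B (fun i => vneg (u i)) (fun i => orev (C i))) /\
  (forall (B u B' u' : 'I_n -> pt) (C C' : 'I_n -> ocirc),
     generic_framed B u -> generic_framed B' u' ->
     induced_chain B u C -> induced_chain B' u' C' -> chain_equiv C C' ->
     (forall i, B' i = B i) /\ frame_equiv u u') /\
  (forall C : 'I_n -> ocirc, generic_chain C ->
     exists (B u : 'I_n -> pt) (C' : 'I_n -> ocirc),
       generic_framed B u /\ induced_chain B u C' /\ chain_equiv C' C).
Proof.
  split; [|split; [|split]].
  -
    intros B u HG. assert (HF := proj1 HG).
    set (C := fun i => mk (B (ord_pred i)) (u (ord_pred i)) (B i)).
    assert (HI : induced_chain B u C) by apply (mk_induced _ _ _ HF).
    exists C. split; auto. split.
    + split.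
      * intros i. split; [apply (HI i)|]. split; [apply (induced_not_same _ _ _ _ HG HI)|].
        exists (B i). apply (induced_gear _ _ _ _ HI).
      * intros i p q Gp Gq.
        assert (G1 := gear_unique _ _ _ _ HG HI (ord_pred i) p). rewrite ord_predK in G1.
        rewrite (G1 Gp) (gear_unique _ _ _ _ HG HI i q Gq).
        destruct HF as [HB _]. have := HB (ord_pred i). rewrite ord_predK. auto.
    + intros i D VD T1 T2.
      destruct HF as [HB _].
      assert (Hne : B (ord_pred i) <> B i) by (have := HB (ord_pred i); rewrite ord_predK; auto).
      destruct (HI i) as (Vi & [O1 _] & [O2 _] & E1 & E2).
      apply (uniq2 _ _ (B (ord_pred i)) (B i)); auto; try apply T1; try apply T2.
      rewrite E1. apply T1.
  -
    intros B u C _ HI i. destruct (HI i) as (Vi & [O1 X1] & [O2 X2] & E1 & E2).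
    split; [apply valid_orev; auto|].
    split; [split; [apply on_orev; auto| rewrite otan_orev cross_vneg; auto]|].
    split; [split; [apply on_orev; auto| rewrite otan_orev cross_vneg; auto]|].
    rewrite !otan_orev E1 E2. auto.
  -
    intros B u B' u' C C' HG HG' HI HI' HE.
    assert (HBB : forall i, B' i = B i).
    { intros i. apply (gear_unique _ _ _ _ HG HI i).
      destruct (induced_gear _ _ _ _ HI' i) as [O1 [O2 E]].
      destruct HE as [HE|HE]; rewrite (HE i) in O1 E; rewrite (HE (ordS i)) in O2 E.
      - split; auto.
      - rewrite !otan_orev in E. apply (proj1 (on_orev _ _)) in O1. apply (proj1 (on_orev _ _)) in O2.
        split; auto. split; auto. apply vneg_inj; auto. }
    split; auto.
    destruct HE as [HE|HE]; [left|right]; intros i;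
      destruct (HI i) as (_ & _ & _ & _ & E); destruct (HI' i) as (_ & _ & _ & _ & E');
      rewrite <- E', HE, HBB, ?otan_orev, E; auto.
  -
    intros C HC.
    set (B := fun i => proj1_sig (constructive_indefinite_description _
                         (proj2 (proj2 (proj1 HC i))))).
    assert (HB : forall i, gear_tangent_at (C i) (C (ordS i)) (B i)).
    { intros i. unfold B. apply proj2_sig. }
    clearbody B.
    set (u := fun i => otan (C i) (B i)).
    exists B, u, C.
    assert (HP : framed_polygon B u).
    { split; [|split].
      - intros i. apply (proj2 HC (ordS i)); [rewrite ordSK; apply HB| apply HB].
      - intros i. apply otan_unit; [apply (proj1 HC i)| apply (HB i)].
      - intros i. unfold u. destruct (HB i) as [O1 [O2 E]]. rewrite E.
        apply ang; [apply (proj1 HC (ordS i)) | auto | apply (HB (ordS i)) |].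
        apply (proj2 HC (ordS i)); [rewrite ordSK; apply HB| apply HB]. }
    assert (HI : induced_chain B u C).
    { intros i. destruct (HB i) as [O1 [O2 E]].
      assert (G := HB (ord_pred i)). rewrite ord_predK in G. destruct G as [P1 [P2 F]].
      split; [apply (proj1 HC i)|].
      split; [split; auto; unfold u; rewrite F; apply cross_self|].
      split; [split; auto; unfold u; apply cross_self|].
      unfold u. split; auto. }
    split; [|split; [auto| left; auto]].
    split; auto. apply (not_nongeneric _ _ _ _ HP HI).
    intros i. apply (proj1 HC i).
Qed.
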